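(* Consider the generalized one-way trading problem (GOT) with capacity $C>0$ and bounds $0<L\le U$, $\theta:=U/L$, under Assumption A. Let $\alpha^*:=1+\ln\theta$, $\beta^*:=C/\alpha^*$, and define the threshold function $$\phi^*(w)=\begin{cases} L & w\in[0,\beta^* ),\\ L\,e^{(1+\ln\theta)w/C-1} & w\in[\beta^*,C],\\ +\infty & w>C.\end{cases}$$ Then the online threshold-based algorithm $\mathsf{OTA}_{\phi^*}$ for GOT has competitive ratio $1+\ln\theta$.
   Context: GOT: a single knapsack of capacity $C$; items $n=1,\dots,N$ arrive one at a time. Item $n$ has a size $D_n>0$ and a value function $g_n:[0,D_n]\to\mathbb{R}_{\ge0}$, revealed on arrival. The offline problem is $\max\sum_n g_n(y_n)$ subject to $\sum_n y_n\le C$, $0\le y_n\le D_n$. Assumption A: each $g_n$ is non-decreasing, differentiable and concave, $g_n(0)=0$, and $L\le g_n'\le U$ on $[0,D_n]$, where $L,U$ (and $C$) are known in advance. An online algorithm irrevocably chooses $y_n$ upon arrival of item $n$ using only items $1,\dots,n$ and $C,L,U$, keeping the constraints feasible. Its competitive ratio is $\sup_{\mathcal I}\mathrm{OPT}(\mathcal I)/\mathrm{ALG}(\mathcal I)$ over all instances satisfying Assumption A, where OPT is the offline optimum and ALG the value obtained by the algorithm; it is $\alpha$-competitive if this is at most $\alpha$. A threshold function is a non-decreasing $\phi:[0,C]\to\mathbb{R}$, extended by $\phi(w)=+\infty$ for $w>C$. $\mathsf{OTA}_\phi$: start with utilization $w^{(1)}=0$; upon arrival of item $n$ choose $y_n^*\in\arg\max_{0\le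 y\le D_n}\, g_n(y)-\int_{w^{(n)}}^{w^{(n)}+y}\phi(u)\,du$ and set $w^{(n+1)}=w^{(n)}+y_n^*$. *)

(* Defs.v *)
From Stdlib Require Import Reals Lra.
From Coquelicot Require Import Coquelicot.
Open Scope R_scope.

Fixpoint psum (y : nat -> R) (n : nat) : R :=
  match n with O => 0 | S m => psum y m + y m end.

(* Assumption A for one item of size D with value function g (only the
   values of g on [0,D] matter). *)
Definition valfun_ok (L U D : R) (g : R -> R) : Prop :=
  0 < D /\
  g 0 = 0 /\
  (forall x y, 0 <= x <= D -> 0 <= y <= D -> x <= y -> g x <= g y) /\
  (forall x y t, 0 <= x <= D -> 0 <= y <= D -> 0 <= t <= 1 ->
      t * g x + (1 - t) * g y <= g (t * x + (1 - t) * y)) /\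
  (exists dg : R -> R, forall x, 0 <= x <= D ->
      derivable_pt_lim g x (dg x) /\ L <= dg x <= U).

Definition instance_ok (L U : R) (N : nat) (D : nat -> R) (g : nat -> R -> R)
  : Prop := forall n, (n < N)%nat -> valfun_ok L U (D n) (g n).

Definition offline_feasible (C : R) (N : nat) (D : nat -> R) (y : nat -> R)
  : Prop := (forall n, (n < N)%nat -> 0 <= y n <= D n) /\ psum y N <= C.

Definition value (N : nat) (g : nat -> R -> R) (y : nat -> R) : R :=
  psum (fun n => g n (y n)) N.

(* Pseudo-utility objective of OTA_phi for item n at utilization w:
   g(y) - int_w^{w+y} phi.  Choices with w + y > C have objective -oo
   (phi = +oo beyond C) and are excluded explicitly below. *)
Definition ota_obj (phi : R -> R) (gn : R -> R) (w y : R) : R :=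
  gn y - RInt phi w (w + y).

Definition OTA_run (phi : R -> R) (C : R) (N : nat) (D : nat -> R)
  (g : nat -> R -> R) (y : nat -> R) : Prop :=
  forall n, (n < N)%nat ->
    let w := psum y n in
    0 <= y n <= D n /\ w + y n <= C /\
    (forall y', 0 <= y' <= D n -> w + y' <= C ->
       ota_obj phi (g n) w y' <= ota_obj phi (g n) w (y n) /\
       (ota_obj phi (g n) w y' = ota_obj phi (g n) w (y n) -> y' <= y n)).

Definition alpha_star (L U : R) : R := 1 + ln (U / L).
Definition beta_star (C L U : R) : R := C / alpha_star L U.

(* phi* on [0,C]; the value +oo for w > C is encoded by the constraint
   w + y <= C in OTA_run. *)
Definition phi_star (C L U : R) (w : R) : R :=
  if Rlt_dec w (beta_star C L U) then L
  else L * exp (alpha_star L U * w / C - 1).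

(* Main.v *)
Require Import Defs.
From Stdlib Require Import Reals Lra Lia FunctionalExtensionality.
From Coquelicot Require Import Coquelicot.
Open Scope R_scope.
Set Default Proof Using "All".

Definition phi2 (a C L x : R) := L * exp (Rmax 0 (a * x / C - 1)).

Lemma alpha_ge1 (L U : R) : 0 < L -> L <= U -> 1 <= alpha_star L U.
Proof.
  intros hL hLU. unfold alpha_star.
  assert (1 <= U / L).
  { apply (Rmult_le_reg_r L); [lra|]. unfold Rdiv. rewrite Rmult_assoc, Rinv_l; lra. }
  assert (0 <= ln (U/L)). { rewrite <- ln_1. apply ln_le; lra. }
  lra.
Qed.

Lemma exp_alpha (L U : R) : 0 < L -> L <= U -> L * exp (alpha_star L U - 1) = U.
Proof.
  intros hL hLU. unfold alpha_star.
  replace (1 + ln (U / L) - 1) with (ln (U/L)) by ring.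
  rewrite exp_ln. field. lra.
  apply Rdiv_lt_0_compat; lra.
Qed.

Lemma phi_eq (C L U x : R) : 0 < C -> 0 < L -> L <= U ->
  phi_star C L U x = phi2 (alpha_star L U) C L x.
Proof.
  intros hC hL hLU. pose proof (alpha_ge1 L U hL hLU) as ha.
  unfold phi_star, phi2, beta_star.
  destruct (Rlt_dec x (C / alpha_star L U)) as [h|h].
  - rewrite Rmax_left. rewrite exp_0; ring.
    apply (Rmult_lt_compat_r (alpha_star L U / C)) in h.
    2:{ apply Rdiv_lt_0_compat; lra. }
    replace (C / alpha_star L U * (alpha_star L U / C)) with 1 in h by (field; lra).
    replace (alpha_star L U * x / C) with (x * (alpha_star L U / C)) by (field; lra). lra.
  - rewrite Rmax_right. reflexivity.
    apply Rnot_lt_le in h.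
    apply (Rmult_le_compat_r (alpha_star L U / C)) in h.
    2:{ left. apply Rdiv_lt_0_compat; lra. }
    replace (C / alpha_star L U * (alpha_star L U / C)) with 1 in h by (field; lra).
    replace (alpha_star L U * x / C) with (x * (alpha_star L U / C)) by (field; lra). lra.
Qed.

Lemma phi2_cont a C L x : continuous (phi2 a C L) x.
Proof.
  unfold phi2.
  apply continuity_pt_filterlim.
  assert (H1 : continuity_pt (fun y => a * y / C - 1) x).
  { apply derivable_continuous_pt. unfold Rdiv.
    apply derivable_pt_minus. 2: apply derivable_pt_const.
    apply derivable_pt_mult. apply derivable_pt_mult. apply derivable_pt_const. apply derivable_pt_id.
    apply derivable_pt_const. }
  assert (H2 : continuity_pt (fun y => Rabs (a * y / C - 1)) x).
  { exact (continuity_pt_comp _ Rabs x H1 (Rcontinuity_abs _)). }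
  assert (H3 : continuity_pt (fun y => Rmax 0 (a * y / C - 1)) x).
  { apply continuity_pt_ext with (f := fun y => ((a * y / C - 1) + Rabs (a * y / C - 1)) * /2).
    intro y. unfold Rmax. destruct (Rle_dec 0 (a*y/C - 1)).
    rewrite Rabs_right; lra. rewrite Rabs_left; lra.
    apply continuity_pt_mult. apply continuity_pt_plus; assumption.
    apply continuity_pt_const; intros u v; reflexivity. }
  assert (H4 : continuity_pt (fun y => exp (Rmax 0 (a * y / C - 1))) x).
  { exact (continuity_pt_comp _ exp x H3 (derivable_continuous_pt _ _ (derivable_pt_exp _))). }
  apply continuity_pt_mult. apply continuity_pt_const; intros u v; reflexivity. exact H4.
Qed.


Section P.
Variables (a C L : R).
Hypotheses (ha : 0 < a) (hC : 0 < C) (hL : 0 < L).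

Lemma arg_mono x y : x <= y -> a * x / C - 1 <= a * y / C - 1.
Proof.
  intros h. unfold Rdiv. apply Rplus_le_compat_r.
  apply Rmult_le_compat_r. left; apply Rinv_0_lt_compat; lra.
  apply Rmult_le_compat_l; lra.
Qed.

Lemma phi2_mono x y : x <= y -> phi2 a C L x <= phi2 a C L y.
Proof.
  intros h. unfold phi2. apply Rmult_le_compat_l. lra.
  destruct (Req_dec (Rmax 0 (a * x / C - 1)) (Rmax 0 (a * y / C - 1))) as [e|n].
  rewrite e; lra. left. apply exp_increasing.
  pose proof (arg_mono x y h). unfold Rmax in *.
  destruct (Rle_dec 0 (a * x / C - 1)); destruct (Rle_dec 0 (a * y / C - 1)); lra.
Qed.

Lemma phi2_ge x : L <= phi2 a C L x.
Proof.
  unfold phi2. set (m := Rmax 0 (a * x / C - 1)).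
  assert (0 <= m) by apply Rmax_l.
  assert (1 <= exp m). { pose proof (exp_ineq1_le m). lra. }
  nra.
Qed.

Lemma exp_le_m u v : u <= v -> exp u <= exp v.
Proof. intros h. destruct (Req_dec u v). subst; lra. left; apply exp_increasing; lra. Qed.

Lemma phi2_le x : 1 <= a -> x <= C -> phi2 a C L x <= L * exp (a - 1).
Proof.
  intros h1 h. unfold phi2. apply Rmult_le_compat_l. lra.
  pose proof (arg_mono x C h).
  replace (a * C / C - 1) with (a - 1) in H by (field; lra).
  apply exp_le_m. apply Rmax_lub; lra.
Qed.

Lemma phi2_lip x y : x <= y -> phi2 a C L y - phi2 a C L x <= phi2 a C L y * (a / C) * (y - x).
Proof.
  intros h. unfold phi2.
  set (p := Rmax 0 (a * y / C - 1)). set (q := Rmax 0 (a * x / C - 1)).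
  assert (hpq : p - q <= a / C * (y - x)).
  { unfold p, q, Rmax. pose proof (arg_mono x y h).
    assert (a * y / C - 1 - (a * x / C - 1) = a / C * (y - x)) by (field; lra).
    assert (0 <= a / C * (y - x)). { apply Rmult_le_pos. left; apply Rdiv_lt_0_compat; lra. lra. }
    destruct (Rle_dec 0 (a * x / C - 1)); destruct (Rle_dec 0 (a * y / C - 1)); lra. }
  assert (e : exp q >= exp p * (1 + (q - p))).
  { replace q with (p + (q - p)) at 1 by ring. rewrite exp_plus.
    apply Rle_ge, Rmult_le_compat_l. left; apply exp_pos. apply exp_ineq1_le. }
  assert (0 < exp p) by apply exp_pos.
  assert (L * exp p - L * exp q <= L * exp p * (p - q)).
  { assert (exp p - exp q <= exp p * (p - q)) by nra. 
    replace (L * exp p - L * exp q) with (L * (exp p - exp q)) by ring.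
    rewrite Rmult_assoc. apply Rmult_le_compat_l; lra. }
  assert (0 < L * exp p) by (apply Rmult_lt_0_compat; lra).
  rewrite Rmult_assoc. eapply Rle_trans. apply H0. apply Rmult_le_compat_l; lra.
Qed.

Lemma phi2_const x : x <= C / a -> phi2 a C L x = L.
Proof.
  intros h. unfold phi2. rewrite Rmax_left. rewrite exp_0; ring.
  apply (Rmult_le_compat_r (a / C)) in h. 2: left; apply Rdiv_lt_0_compat; lra.
  replace (C / a * (a / C)) with 1 in h by (field; lra).
  replace (a * x / C) with (x * (a / C)) by (field; lra). lra.
Qed.

Lemma phi2_exp x : C / a <= x -> phi2 a C L x = L * exp (a * x / C - 1).
Proof.
  intros h. unfold phi2. rewrite Rmax_right. reflexivity.
  apply (Rmult_le_compat_r (a / C)) in h. 2: left; apply Rdiv_lt_0_compat; lra.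
  replace (C / a * (a / C)) with 1 in h by (field; lra).
  replace (a * x / C) with (x * (a / C)) by (field; lra). lra.
Qed.

Lemma phi2_strict x y : C / a <= x -> x < y -> phi2 a C L x < phi2 a C L y.
Proof.
  intros h1 h2. rewrite !phi2_exp by lra.
  apply Rmult_lt_compat_l. lra. apply exp_increasing.
  unfold Rdiv. apply Rplus_lt_compat_r. apply Rmult_lt_compat_r.
  apply Rinv_0_lt_compat; lra. apply Rmult_lt_compat_l; lra.
Qed.

Lemma ex_phi2 x y : ex_RInt (phi2 a C L) x y.
Proof. apply (@ex_RInt_continuous R_CompleteNormedModule). intros; apply phi2_cont. Qed.

Lemma RInt_chas x y z : RInt (phi2 a C L) x y + RInt (phi2 a C L) y z = RInt (phi2 a C L) x z.
Proof. apply (RInt_Chasles (phi2 a C L)); apply ex_phi2. Qed.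

Lemma RInt_cst_R (c x y : R) : RInt (fun _ => c) x y = (y - x) * c.
Proof. rewrite RInt_const. reflexivity. Qed.

Lemma RInt_lo x y : x <= y -> (y - x) * phi2 a C L x <= RInt (phi2 a C L) x y.
Proof.
  intros h. rewrite <- RInt_cst_R. apply RInt_le; auto.
  apply ex_RInt_const. apply ex_phi2. intros t ht. apply phi2_mono; lra.
Qed.

Lemma RInt_hi x y : x <= y -> RInt (phi2 a C L) x y <= (y - x) * phi2 a C L y.
Proof.
  intros h. rewrite <- RInt_cst_R. apply RInt_le; auto.
  apply ex_phi2. apply ex_RInt_const. intros t ht. apply phi2_mono; lra.
Qed.

Lemma RInt_flat x y : x <= y -> y <= C / a -> RInt (phi2 a C L) x y = (y - x) * L.
Proof.
  intros h1 h2. rewrite <- RInt_cst_R. apply RInt_ext.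
  intros t ht. rewrite Rmin_left in ht by lra. rewrite Rmax_right in ht by lra.
  apply phi2_const; lra.
Qed.

Lemma RInt_full W : C / a <= W -> RInt (phi2 a C L) 0 W = phi2 a C L W * C / a.
Proof.
  intros h. rewrite <- (RInt_chas 0 (C / a) W).
  rewrite RInt_flat. 2: left; apply Rdiv_lt_0_compat; lra. 2: lra.
  rewrite (RInt_ext _ (fun x => L * exp (a * x / C - 1))).
  2:{ intros t ht. rewrite Rmin_left in ht by lra. rewrite Rmax_right in ht by lra.
      apply phi2_exp; lra. }
  assert (I : is_RInt (fun x => L * exp (a * x / C - 1)) (C / a) W
     (minus ((L * C / a) * exp (a * W / C - 1)) ((L * C / a) * exp (a * (C/a) / C - 1)))).
  { apply (is_RInt_derive (fun x => (L * C / a) * exp (a * x / C - 1))).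
    intros x _. auto_derive. auto. replace (a*x*/C + - (1)) with (a*x/C-1) by (unfold Rdiv; ring). field. lra.
    intros x _. apply continuity_pt_filterlim.
    apply continuity_pt_mult. apply continuity_pt_const; intros u v; reflexivity.
    apply derivable_continuous_pt. apply derivable_pt_comp with (f2 := exp).
    unfold Rdiv.
    apply derivable_pt_minus. 2: apply derivable_pt_const.
    apply derivable_pt_mult. apply derivable_pt_mult. apply derivable_pt_const. apply derivable_pt_id.
    apply derivable_pt_const. apply derivable_pt_exp. }
  apply (@is_RInt_unique R_CompleteNormedModule) in I. rewrite I. rewrite phi2_exp by lra.
  replace (a * (C / a) / C - 1) with 0 by (field; split; lra). rewrite exp_0.
  unfold minus, plus, opp; simpl. field. lra.
Qed.

End P.


Lemma lim_le A B c t0 : 0 < t0 -> 0 <= c -> (forall t, 0 < t <= t0 -> A <= B + c * t) -> A <= B.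
Proof.
  intros h0 hc H. destruct (Rle_dec A B) as [|n]; auto. exfalso.
  set (t := Rmin t0 ((A - B) / (2 * (c + 1)))).
  assert (ht1 : t <= t0) by apply Rmin_l.
  assert (ht2 : t <= (A - B) / (2 * (c + 1))) by apply Rmin_r.
  assert (ht3 : 0 < t). { unfold t, Rmin. destruct (Rle_dec _ _). lra. apply Rdiv_lt_0_compat; lra. }
  specialize (H t (conj ht3 ht1)).
  assert (t * (2 * (c + 1)) <= A - B).
  { apply (Rmult_le_compat_r (2 * (c+1))) in ht2. 2: lra.
    replace ((A - B) / (2 * (c + 1)) * (2 * (c + 1))) with (A - B) in ht2 by (field; lra). lra. }
  nra.
Qed.

Section Q.
Variables (a C L U : R).
Hypotheses (ha : 1 <= a) (hC : 0 < C) (hL : 0 < L) (hU : L * exp (a - 1) = U).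
Let phi := phi2 a C L.

Lemma lipU u v : u <= v -> v <= C -> phi v - phi u <= (U * a / C) * (v - u).
Proof.
  intros h1 h2. unfold phi. eapply Rle_trans. apply phi2_lip; auto; lra.
  assert (phi2 a C L v <= U) by (rewrite <- hU; apply phi2_le; lra).
  assert (0 <= a / C * (v - u)). { apply Rmult_le_pos. left; apply Rdiv_lt_0_compat; lra. lra. }
  replace (U * a / C * (v - u)) with (U * (a / C * (v - u))) by (field; lra).
  rewrite Rmult_assoc. apply Rmult_le_compat_r; auto.
Qed.

Lemma item_opt D g w ys : valfun_ok L U D g -> 0 <= ys <= D -> w + ys < C ->
  (forall y', 0 <= y' <= D -> w + y' <= C ->
     g y' - RInt phi w (w+y') <= g ys - RInt phi w (w+ys)) ->
  forall z, 0 <= z <= D -> g z - phi (w+ys) * z <= g ys - phi (w+ys) * ys.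
Proof.
  intros [hD [h0 [hmono [hconc _]]]] hys hwc Hopt z hz.
  set (lam := phi (w + ys)). set (K := U * a / C).
  assert (hK : 0 <= K).
  { unfold K. assert (L <= U). { rewrite <- hU. pose proof (exp_ineq1_le (a - 1)). nra. }
    apply Rmult_le_pos. apply Rmult_le_pos; lra. left; apply Rinv_0_lt_compat; lra. }
  assert (Hch : forall u v, RInt phi w u + RInt phi u v = RInt phi w v)
    by (intros; unfold phi; apply RInt_chas; lra).
  destruct (Rtotal_order z ys) as [hlt|[heq|hgt]].
  -
    set (d := ys - z).
    assert (hd : 0 < d) by (unfold d; lra).
    assert (d * lam <= g ys - g z); [|unfold d in *; nra].
    apply (lim_le _ _ (K * d * d) 1). lra. 
    { apply Rmult_le_pos; [apply Rmult_le_pos|]; lra. }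
    intros t ht.
    set (y := ys - t * d).
    assert (hy1 : z <= y <= ys) by (unfold y, d in *; nra).
    specialize (Hopt y ltac:(lra) ltac:(lra)).
    specialize (Hch (w + y) (w + ys)).
    assert (Hlo := RInt_lo a C L ltac:(lra) ltac:(lra) ltac:(lra) (w + y) (w + ys) ltac:(lra)).
    fold phi in Hlo.
    assert (Hlip := lipU (w + y) (w + ys) ltac:(lra) ltac:(lra)). fold K lam in Hlip.
    assert (Hc := hconc z ys t ltac:(lra) ltac:(lra) ltac:(lra)).
    replace (t * z + (1 - t) * ys) with y in Hc by (unfold y, d; ring).
    replace (w + ys - (w + y)) with (t * d) in Hlo, Hlip by (unfold y; ring).
    assert (t * d * (lam - K * (t * d)) <= t * (g ys - g z)).
    { assert (t * d * (lam - K * (t * d)) <= t * d * phi (w + y)).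
      { apply Rmult_le_compat_l. nra. lra. }
      lra. }
    assert (d * (lam - K * (t * d)) <= g ys - g z).
    { apply (Rmult_le_reg_l t). lra. lra. }
    nra.
  - subst; lra.
  - set (d := z - ys).
    assert (hd : 0 < d) by (unfold d; lra).
    assert (g z - g ys <= d * lam); [|unfold d in *; nra].
    set (t0 := Rmin 1 ((C - w - ys) / d)).
    assert (ht0 : 0 < t0). { unfold t0, Rmin. destruct (Rle_dec _ _). lra. apply Rdiv_lt_0_compat; lra. }
    apply (lim_le _ _ (K * d * d) t0). lra.
    { apply Rmult_le_pos; [apply Rmult_le_pos|]; lra. }
    intros t ht.
    assert (t <= 1) by (pose proof (Rmin_l 1 ((C - w - ys) / d)); fold t0 in H; lra).
    assert (t * d <= C - w - ys).
    { pose proof (Rmin_r 1 ((C - w - ys) / d)). fold t0 in H0.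
      apply (Rmult_le_compat_r d) in H0. 2: lra.
      replace ((C - w - ys) / d * d) with (C - w - ys) in H0 by (field; lra). nra. }
    set (y := ys + t * d).
    assert (hy1 : ys <= y <= z) by (unfold y, d in *; nra).
    specialize (Hopt y ltac:(lra) ltac:(unfold y; lra)).
    specialize (Hch (w + ys) (w + y)).
    assert (Hhi := RInt_hi a C L ltac:(lra) ltac:(lra) ltac:(lra) (w + ys) (w + y) ltac:(lra)).
    fold phi in Hhi.
    assert (Hlip := lipU (w + ys) (w + y) ltac:(lra) ltac:(unfold y; lra)). fold K lam in Hlip.
    assert (Hc := hconc z ys t ltac:(lra) ltac:(lra) ltac:(lra)).
    replace (t * z + (1 - t) * ys) with y in Hc by (unfold y, d; ring).
    replace (w + y - (w + ys)) with (t * d) in Hhi, Hlip by (unfold y; ring).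
    assert (t * (g z - g ys) <= t * d * (lam + K * (t * d))).
    { assert (t * d * phi (w + y) <= t * d * (lam + K * (t * d))).
      { apply Rmult_le_compat_l. nra. lra. }
      lra. }
    assert (g z - g ys <= d * (lam + K * (t * d))).
    { apply (Rmult_le_reg_l t). lra. lra. }
    nra.
Qed.
End Q.


Lemma psum_le f h N : (forall n, (n < N)%nat -> f n <= h n) -> psum f N <= psum h N.
Proof.
  induction N; simpl; intros H. lra.
  assert (psum f N <= psum h N) by (apply IHN; intros; apply H; lia).
  specialize (H N ltac:(lia)). lra.
Qed.

Lemma psum_plus f h N : psum (fun n => f n + h n) N = psum f N + psum h N.
Proof. induction N; simpl. lra. rewrite IHN; ring. Qed.

Lemma psum_minus f h N : psum (fun n => f n - h n) N = psum f N - psum h N.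
Proof. induction N; simpl. lra. rewrite IHN; ring. Qed.

Lemma psum_scal c f N : psum (fun n => c * f n) N = c * psum f N.
Proof. induction N; simpl. lra. rewrite IHN; ring. Qed.

Lemma psum_mono y N m : (forall n, (n < N)%nat -> 0 <= y n) -> (m <= N)%nat -> psum y m <= psum y N.
Proof.
  induction N; intros H hm.
  - replace m with 0%nat by lia. lra.
  - destruct (Nat.eq_dec m (S N)). subst; lra.
    simpl. assert (psum y m <= psum y N) by (apply IHN; [intros; apply H; lia| lia]).
    specialize (H N ltac:(lia)). lra.
Qed.

Lemma psum_nonneg y N : (forall n, (n < N)%nat -> 0 <= y n) -> 0 <= psum y N.
Proof. intros H. apply (psum_mono y N 0) in H; simpl in *; lia || lra. Qed.

Lemma mvt_bounds L U D g x y : valfun_ok L U D g -> 0 <= x -> x <= y -> y <= D ->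
  L * (y - x) <= g y - g x <= U * (y - x).
Proof.
  intros [_ [_ [_ [_ [dg Hdg]]]]] h1 h2 h3.
  destruct (Req_dec x y). subst. lra.
  destruct (MVT_cor2 g dg x y ltac:(lra)) as [c [e hc]].
  { intros c hc. apply Hdg; lra. }
  destruct (Hdg c ltac:(lra)) as [_ hb].
  rewrite e. split; apply Rmult_le_compat_r; lra.
Qed.

Lemma g_nonneg L U D g z : 0 < L -> valfun_ok L U D g -> 0 <= z <= D -> 0 <= g z.
Proof.
  intros hL hv hz. pose proof (mvt_bounds L U D g 0 z hv ltac:(lra) ltac:(lra) ltac:(lra)).
  destruct hv as [_ [h0 _]]. rewrite h0 in H. nra.
Qed.

Lemma g_le_U L U D g z : valfun_ok L U D g -> 0 <= z <= D -> g z <= U * z.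
Proof.
  intros hv hz. pose proof (mvt_bounds L U D g 0 z hv ltac:(lra) ltac:(lra) ltac:(lra)).
  destruct hv as [_ [h0 _]]. rewrite h0 in H. lra.
Qed.

Section M.
Variables (a C L U : R).
Hypotheses (ha : 1 <= a) (hC : 0 < C) (hL : 0 < L) (hU : L * exp (a - 1) = U).
Let phi := phi2 a C L.

Lemma item_full D g w ys : valfun_ok L U D g -> 0 <= ys <= D -> w + ys < C / a ->
  (forall y', 0 <= y' <= D -> w + y' <= C ->
     g y' - RInt phi w (w+y') <= g ys - RInt phi w (w+ys) /\
     (g y' - RInt phi w (w+y') = g ys - RInt phi w (w+ys) -> y' <= ys)) ->
  ys = D.
Proof.
  intros hv hys hw Hopt.
  assert (hb : C / a <= C).
  { apply (Rmult_le_reg_r a). lra. replace (C / a * a) with C by (field; lra). nra. }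
  destruct (Req_dec ys D) as [e|n]; auto. exfalso.
  set (y' := Rmin D (C / a - w)).
  assert (hy' : ys < y' <= D).
  { unfold y', Rmin. destruct (Rle_dec _ _); lra. }
  assert (hy'2 : w + y' <= C / a) by (unfold y', Rmin; destruct (Rle_dec _ _); lra).
  destruct (Hopt y' ltac:(lra) ltac:(lra)) as [H1 H2].
  assert (Hch : RInt phi w (w + ys) + RInt phi (w + ys) (w + y') = RInt phi w (w + y'))
    by (unfold phi; apply RInt_chas; lra).
  assert (Hf : RInt phi (w + ys) (w + y') = (w + y' - (w + ys)) * L)
    by (unfold phi; apply RInt_flat; lra).
  pose proof (mvt_bounds L U D g ys y' hv ltac:(lra) ltac:(lra) ltac:(lra)).
  assert (y' <= ys) by (apply H2; lra). lra.
Qed.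


Lemma upper N D g y yopt : instance_ok L U N D g -> OTA_run phi C N D g y ->
  offline_feasible C N D yopt -> value N g yopt <= a * value N g y.
Proof.
  intros Hinst Hrun [Hf1 Hf2]. unfold value.
  assert (Hr : forall n, (n < N)%nat ->
    0 <= y n <= D n /\ psum y n + y n <= C /\
    (forall y', 0 <= y' <= D n -> psum y n + y' <= C ->
       g n y' - RInt phi (psum y n) (psum y n + y') <= g n (y n) - RInt phi (psum y n) (psum y n + y n) /\
       (g n y' - RInt phi (psum y n) (psum y n + y') = g n (y n) - RInt phi (psum y n) (psum y n + y n) -> y' <= y n))).
  { intros n hn. specialize (Hrun n hn). cbv zeta in Hrun. unfold ota_obj in Hrun. exact Hrun. }
  assert (Hy0 : forall n, (n < N)%nat -> 0 <= y n) by (intros n hn; destruct (Hr n hn) as [[? ?] _]; auto).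
  set (W := psum y N).
  assert (hW0 : 0 <= W) by (apply psum_nonneg; auto).
  assert (hWn : forall n, (n < N)%nat -> psum y n + y n <= W).
  { intros n hn. change (psum y (S n) <= W). apply psum_mono; auto. }
  assert (hWC : W <= C).
  { unfold W. destruct N. simpl; lra. simpl. apply Hr. lia. }
  assert (Hgi : forall n, (n < N)%nat -> RInt phi (psum y n) (psum y n + y n) <= g n (y n)).
  { intros n hn. destruct (Hr n hn) as [h1 [h2 h3]].
    destruct (h3 0 ltac:(split; [lra| apply Hinst in hn; destruct hn; lra]) ltac:(pose proof (Hy0 n hn); lra)) as [h4 _].
    rewrite Rplus_0_r, RInt_point in h4. destruct (Hinst n hn) as [_ [hg0 _]]. rewrite hg0 in h4.
    simpl in h4. unfold zero in h4; simpl in h4. lra. }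
  assert (HI1 : forall m, (m <= N)%nat -> RInt phi 0 (psum y m) <= psum (fun n => g n (y n)) m).
  { induction m; intros hm; simpl. rewrite RInt_point. simpl; unfold zero; simpl; lra.
    rewrite <- (RInt_chas a C L ltac:(lra) ltac:(lra) ltac:(lra) 0 (psum y m)). fold phi.
    pose proof (IHm ltac:(lia)). pose proof (Hgi m ltac:(lia)). lra. }
  assert (HI2 : forall m, (m <= N)%nat -> RInt phi 0 (psum y m) <= psum (fun n => phi (psum y n + y n) * y n) m).
  { induction m; intros hm; simpl. rewrite RInt_point. simpl; unfold zero; simpl; lra.
    rewrite <- (RInt_chas a C L ltac:(lra) ltac:(lra) ltac:(lra) 0 (psum y m)). fold phi.
    pose proof (IHm ltac:(lia)).
    pose proof (RInt_hi a C L ltac:(lra) ltac:(lra) ltac:(lra) (psum y m) (psum y m + y m) ltac:(pose proof (Hy0 m ltac:(lia)); lra)).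
    fold phi in H0. replace (psum y m + y m - psum y m) with (y m) in H0 by ring. lra. }
  pose proof (HI1 N (le_n N)) as I1. pose proof (HI2 N (le_n N)) as I2. fold W in I1, I2.
  assert (hALG : 0 <= psum (fun n => g n (y n)) N).
  { apply psum_nonneg. intros n hn. apply (g_nonneg L U (D n)); auto. apply Hr; auto. }
  assert (hb : C / a <= C).
  { apply (Rmult_le_reg_r a). lra. replace (C / a * a) with C by (field; lra). nra. }
  destruct (Rlt_dec W (C / a)) as [h1|h1].
  - assert (HD : forall n, (n < N)%nat -> y n = D n).
    { intros n hn. destruct (Hr n hn) as [hh1 [hh2 hh3]].
      apply (item_full (D n) (g n) (psum y n)); auto. pose proof (hWn n hn); lra. }
    assert (psum (fun n => g n (yopt n)) N <= psum (fun n => g n (y n)) N).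
    { apply psum_le. intros n hn. rewrite HD by auto. destruct (Hinst n hn) as [hD0 [_ [hm _]]].
      pose proof (Hf1 n hn). apply hm; lra. }
    nra.
  - destruct (Rlt_dec W C) as [h2|h2].
    + set (lam := phi W).
      assert (hlam : L <= lam) by (unfold lam, phi; apply phi2_ge; lra).
      assert (psum (fun n => g n (yopt n)) N <=
              psum (fun n => (g n (y n) - phi (psum y n + y n) * y n) + lam * yopt n) N).
      { apply psum_le. intros n hn. destruct (Hr n hn) as [hh1 [hh2 hh3]].
        pose proof (hWn n hn).
        pose proof (item_opt a C L U ha hC hL hU (D n) (g n) (psum y n) (y n) (Hinst n hn) hh1 ltac:(lra)
                     (fun y' h1 h2 => proj1 (hh3 y' h1 h2)) (yopt n) (Hf1 n hn)).
        fold phi in H0.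
        assert (phi (psum y n + y n) <= lam) by (unfold lam, phi; apply phi2_mono; lra).
        pose proof (Hf1 n hn). nra. }
      rewrite psum_plus, psum_minus, psum_scal in H.
      pose proof (RInt_full a C L ltac:(lra) ltac:(lra) ltac:(lra) W ltac:(lra)). fold phi lam in H0.
      assert (lam * psum yopt N <= lam * C) by (apply Rmult_le_compat_l; lra).
      assert (lam * C = a * RInt phi 0 W) by (rewrite H0; field; lra).
      nra.
    + assert (W = C) by lra.
      assert (psum (fun n => g n (yopt n)) N <= psum (fun n => U * yopt n) N).
      { apply psum_le. intros n hn. apply (g_le_U L U (D n)); auto. }
      rewrite psum_scal in H0.
      pose proof (RInt_full a C L ltac:(lra) ltac:(lra) ltac:(lra) W ltac:(lra)). fold phi in H1.
      assert (phi W = U).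
      { unfold phi. rewrite phi2_exp by lra. rewrite H. rewrite <- hU. f_equal. f_equal. field. lra. }
      assert (L <= U). { rewrite <- hU. pose proof (exp_ineq1_le (a - 1)). nra. }
      assert (U * psum yopt N <= U * C) by (apply Rmult_le_compat_l; lra).
      assert (U * C = a * RInt phi 0 W) by (rewrite H1, H2; field; lra).
      nra.
Qed.
End M.


Section T.
Variables (a C L U : R).
Hypotheses (ha : 1 <= a) (hC : 0 < C) (hL : 0 < L) (hU : L * exp (a - 1) = U).
Let phi := phi2 a C L.

Lemma lin_run p w x ys D : w <= x -> x <= C -> C / a <= x -> w + ys = x -> 0 <= ys <= D ->
  phi x = p ->
  forall y', 0 <= y' <= D -> w + y' <= C ->
    p * y' - RInt phi w (w + y') <= p * ys - RInt phi w (w + ys) /\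
    (p * y' - RInt phi w (w + y') = p * ys - RInt phi w (w + ys) -> y' <= ys).
Proof.
  intros h1 h2 h3 h4 h5 h6 y' hy1 hy2. rewrite h4.
  destruct (Rle_dec y' ys) as [hle|hgt].
  - split; [|intros; lra].
    assert (Hch : RInt phi w (w + y') + RInt phi (w + y') x = RInt phi w x)
      by (unfold phi; apply RInt_chas; lra).
    pose proof (RInt_hi a C L ltac:(lra) ltac:(lra) ltac:(lra) (w + y') x ltac:(lra)). fold phi in H.
    rewrite h6 in H. nra.
  - apply Rnot_le_lt in hgt.
    assert (Hch : RInt phi w x + RInt phi x (w + y') = RInt phi w (w + y'))
      by (unfold phi; apply RInt_chas; lra).
    set (b := w + y'). set (mm := (x + b) / 2).
    assert (Hch2 : RInt phi x mm + RInt phi mm b = RInt phi x b)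
      by (unfold phi; apply RInt_chas; lra).
    pose proof (RInt_lo a C L ltac:(lra) ltac:(lra) ltac:(lra) x mm ltac:(unfold mm, b; lra)).
    pose proof (RInt_lo a C L ltac:(lra) ltac:(lra) ltac:(lra) mm b ltac:(unfold mm, b; lra)).
    fold phi in H, H0.
    assert (phi x < phi mm). { unfold phi. apply phi2_strict; try lra. unfold mm, b. lra. }
    assert ((b - mm) * phi x < (b - mm) * phi mm) by (apply Rmult_lt_compat_l; [unfold mm, b; lra | assumption]).
    assert (RInt phi x b > (b - x) * p) by (rewrite <- h6; nra).
    assert (p * y' - RInt phi w (w + y') < p * ys - RInt phi w x).
    { rewrite <- Hch. assert (p*y' = p*ys + (b-x)*p) by (unfold b; rewrite <- h4; ring). fold b. lra. }
    change (w + y') with b in H4 |- *. split; intros; lra.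
Qed.

Lemma lin_ok p D : 0 < D -> L <= p <= U -> valfun_ok L U D (fun y => p * y).
Proof.
  intros hD hp. split; auto. split. ring. split.
  intros x y _ _ h. apply Rmult_le_compat_l; lra. split.
  intros x y t _ _ _. apply Req_le; ring.
  exists (fun _ => p). intros x _. split; [|lra].
  apply is_derive_Reals. auto_derive; auto; ring.
Qed.


Lemma exp_small s r : 0 <= s -> 0 < r -> s <= r / (1 + r) -> exp s <= 1 + r.
Proof.
  intros h1 h2 h3.
  assert (s * (1 + r) <= r).
  { apply (Rmult_le_compat_r (1 + r)) in h3. 2: lra.
    replace (r / (1 + r) * (1 + r)) with r in h3 by (field; lra). lra. }
  assert (s < 1) by nra.
  pose proof (exp_ineq1_le (- s)).
  assert (exp s * exp (- s) = 1) by (rewrite <- exp_plus; replace (s + - s) with 0 by ring; apply exp_0).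
  pose proof (exp_pos s).
  assert (exp s * (1 - s) <= 1) by nra.
  nra.
Qed.

Lemma tight_m (m : nat) : (1 <= m)%nat ->
  let s := (a - 1) / INR m in
  exists N D g y yopt, instance_ok L U N D g /\ OTA_run phi C N D g y /\ offline_feasible C N D yopt /\
    0 <= value N g y /\ value N g y <= (C / a) * (L + exp s * (U - L)) /\ value N g yopt = U * C.
Proof.
  intros hm s.
  assert (hmR : 1 <= INR m) by (apply (le_INR 1 m); auto).
  set (beta := C / a). set (delta := (C - beta) / INR m).
  assert (hb : 0 < beta <= C).
  { unfold beta. split. apply Rdiv_lt_0_compat; lra.
    apply (Rmult_le_reg_r a). lra. replace (C / a * a) with C by (field; lra). nra. }
  assert (hd : 0 <= delta) by (unfold delta; apply Rmult_le_pos; [lra| left; apply Rinv_0_lt_compat; lra]).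
  assert (hmd : INR m * delta = C - beta) by (unfold delta; field; lra).
  assert (hs : delta = C * s / a).
  { unfold delta, s, beta. field. split; lra. }
  assert (hs0 : 0 <= s) by (unfold s; apply Rmult_le_pos; [lra| left; apply Rinv_0_lt_compat; lra]).
  set (xk := fun k : nat => beta + INR k * delta).
  set (pk := fun k : nat => phi (xk k)).
  assert (hx : forall k, (k <= m)%nat -> beta <= xk k <= C).
  { intros k hk. unfold xk. apply le_INR in hk. pose proof (pos_INR k). split. nra. nra. }
  assert (hpk : forall k, (k <= m)%nat -> pk k = L * exp (INR k * s)).
  { intros k hk. unfold pk, phi. rewrite phi2_exp; try lra. 2: apply hx; auto.
    f_equal. f_equal. unfold xk, beta. rewrite hs. field. split; lra. }
  set (y := fun k : nat => match k with O => beta | S _ => delta end).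
  assert (hpsum : forall k, psum y (S k) = xk k).
  { induction k. simpl. unfold xk. simpl. lra.
    change (psum y (S k) + delta = xk (S k)). rewrite IHk. unfold xk. rewrite S_INR. ring. }
  set (yopt := fun k : nat => if Nat.eqb k m then C else 0).
  assert (hopt0 : forall (f : nat -> R) k, (k <= m)%nat -> psum (fun n => f n * yopt n) k = 0).
  { intros f. induction k; intros hk. reflexivity. simpl. rewrite IHk by lia.
    unfold yopt. replace (Nat.eqb k m) with false. ring. symmetry. apply Nat.eqb_neq. lia. }
  assert (hoptm : yopt m = C) by (unfold yopt; rewrite Nat.eqb_refl; auto).
  assert (hxm : xk m = C) by (unfold xk; lra).
  assert (hpU : pk m = U).
  { unfold pk, phi. rewrite hxm. rewrite phi2_exp; try lra. rewrite <- hU. f_equal. f_equal. field. lra. unfold beta in hb; lra. }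
  exists (S m), (fun _ => C), (fun k z => pk k * z), y, yopt.
  split; [|split; [|split; [|split; [|split]]]].
  - intros n hn. apply lin_ok. auto. unfold pk. split.
    apply phi2_ge; lra. rewrite <- hU. apply phi2_le; try lra. apply hx; lia.
  - intros n hn. cbv zeta. unfold ota_obj.
    assert (hyn : 0 <= y n) by (destruct n; simpl; lra).
    assert (hw : psum y n + y n = xk n) by (rewrite <- hpsum; reflexivity).
    assert (hxn := hx n ltac:(lia)).
    assert (hw0 : 0 <= psum y n).
    { apply psum_nonneg. intros k _. destruct k; simpl; lra. }
    split; [|split]. split; auto. lra. lra.
    intros y' hy1 hy2.
    apply (lin_run (pk n) (psum y n) (xk n) (y n) C); try (unfold beta in *; lra); reflexivity.
  - split. intros n hn. unfold yopt. destruct (Nat.eqb n m); lra.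
    simpl. assert (forall k, (k <= m)%nat -> psum yopt k = 0).
    { induction k; intros hk. reflexivity. simpl. rewrite IHk by lia. unfold yopt.
      replace (Nat.eqb k m) with false. ring. symmetry. apply Nat.eqb_neq. lia. }
    rewrite H by lia. rewrite hoptm. lra.
  - apply psum_nonneg. intros n hn. apply Rmult_le_pos.
    unfold pk. left. apply Rlt_le_trans with L; auto. apply phi2_ge; lra.
    destruct n; simpl; lra.
  - unfold value.
    assert (forall k, (k <= m)%nat -> psum (fun n => pk n * y n) (S k) <= (C / a) * L * (1 + exp (INR (S k) * s) - exp s)).
    { induction k; intros hk.
      - simpl. rewrite hpk by lia. simpl. rewrite Rmult_0_l, exp_0, Rmult_1_l.
        unfold beta. lra.
      - change (psum (fun n => pk n * y n) (S k) + pk (S k) * delta <= C / a * L * (1 + exp (INR (S (S k)) * s) - exp s)).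
        pose proof (IHk ltac:(lia)). rewrite hpk by lia.
        assert (exp (INR (S (S k)) * s) = exp (INR (S k) * s) * exp s).
        { rewrite <- exp_plus. f_equal. rewrite (S_INR (S k)). ring. }
        rewrite H0. pose proof (exp_ineq1_le s). pose proof (exp_pos (INR (S k) * s)).
        assert (L * exp (INR (S k) * s) * delta <= C / a * L * (exp (INR (S k) * s) * exp s - exp (INR (S k) * s))).
        { rewrite hs. replace (C / a * L * (exp (INR (S k) * s) * exp s - exp (INR (S k) * s)))
            with ((C / a) * L * exp (INR (S k) * s) * (exp s - 1)) by ring.
          replace (L * exp (INR (S k) * s) * (C * s / a)) with ((C / a) * L * exp (INR (S k) * s) * s) by (field; lra).
          apply Rmult_le_compat_l. 2: lra.
          apply Rmult_le_pos. apply Rmult_le_pos. left; apply Rdiv_lt_0_compat; lra. lra. lra. }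
        lra. }
    pose proof (H m (le_n m)).
    assert (L * exp (INR m * s) = U).
    { rewrite <- hU. f_equal. f_equal. unfold s. field. lra. }
    assert (exp (INR (S m) * s) = exp (INR m * s) * exp s).
    { rewrite <- exp_plus. f_equal. rewrite S_INR. ring. }
    rewrite H2 in H0.
    unfold beta. rewrite <- H1.
    replace (C / a * (L + exp s * (L * exp (INR m * s) - L))) with (C / a * L * (1 + exp (INR m * s) * exp s - exp s)) by ring.
    exact H0.
  - unfold value. simpl. rewrite hopt0 by lia. rewrite hoptm, hpU. ring.
Qed.

End T.


Theorem theorem1 (C L U : R) (hC : 0 < C) (hL : 0 < L) (hLU : L <= U) :
  (* upper bound: OPT <= (1 + ln theta) * ALG on every instance *)
  (forall (N : nat) (D : nat -> R) (g : nat -> R -> R) (y yopt : nat -> R),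
      instance_ok L U N D g ->
      OTA_run (phi_star C L U) C N D g y ->
      offline_feasible C N D yopt ->
      value N g yopt <= alpha_star L U * value N g y) /\
  (* tightness: the supremum of OPT/ALG is not smaller than 1 + ln theta *)
  (forall eps : R, 0 < eps ->
    exists (N : nat) (D : nat -> R) (g : nat -> R -> R) (y yopt : nat -> R),
      instance_ok L U N D g /\
      OTA_run (phi_star C L U) C N D g y /\
      offline_feasible C N D yopt /\
      (alpha_star L U - eps) * value N g y < value N g yopt).
Proof.
  pose proof (alpha_ge1 L U hL hLU) as ha.
  pose proof (exp_alpha L U hL hLU) as hU.
  assert (Hphi : phi_star C L U = phi2 (alpha_star L U) C L).
  { apply functional_extensionality. intro x. apply phi_eq; auto. }
  rewrite Hphi. set (a := alpha_star L U) in *.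
  split.
  - intros N D g y yopt H1 H2 H3. exact (upper a C L U ha hC hL hU N D g y yopt H1 H2 H3).
  - intros eps heps.
    set (r := eps / (2 * a)).
    assert (hr : 0 < r) by (unfold r; apply Rdiv_lt_0_compat; lra).
    destruct (INR_unbounded ((a - 1) * (1 + r) / r)) as [m0 hm0].
    set (m := S m0).
    assert (hmR : INR m0 <= INR m) by (unfold m; rewrite S_INR; lra).
    assert (hm1 : 1 <= INR m) by (unfold m; rewrite S_INR; pose proof (pos_INR m0); lra).
    destruct (tight_m a C L U ha hC hL hU m ltac:(unfold m; lia))
      as [N [D [g [y [yopt [h1 [h2 [h3 [h4 [h5 h6]]]]]]]]]].
    exists N, D, g, y, yopt. split; [|split; [|split]]; auto.
    set (s := (a - 1) / INR m) in *.
    assert (hs0 : 0 <= s) by (unfold s; apply Rmult_le_pos; [lra| left; apply Rinv_0_lt_compat; lra]).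
    assert (hsr : s <= r / (1 + r)).
    { unfold s. apply (Rmult_le_reg_r (INR m * (1 + r))). nra.
      replace ((a - 1) / INR m * (INR m * (1 + r))) with ((a - 1) * (1 + r)) by (field; lra).
      replace (r / (1 + r) * (INR m * (1 + r))) with (r * INR m) by (field; lra).
      apply (Rmult_lt_compat_r r) in hm0; auto.
      replace ((a - 1) * (1 + r) / r * r) with ((a - 1) * (1 + r)) in hm0 by (field; lra).
      nra. }
    pose proof (exp_small a C L U ha hC hL hU s r hs0 hr hsr) as hes.
    rewrite h6.
    assert (hUp : 0 < U) by lra.
    destruct (Rle_dec (a - eps) 0) as [hn|hp].
    + assert ((a - eps) * value N g y <= 0) by nra. nra.
    + apply Rnot_le_lt in hp.
      assert (L + exp s * (U - L) <= U + r * (U - L)).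
      { assert (exp s * (U - L) <= (1 + r) * (U - L)) by (apply Rmult_le_compat_r; lra).
        assert ((1 + r) * (U - L) = (U - L) + r * (U - L)) by ring. lra. }
      assert (value N g y <= C / a * (U + r * (U - L))).
      { eapply Rle_trans. apply h5. apply Rmult_le_compat_l. left; apply Rdiv_lt_0_compat; lra. lra. }
      assert ((a - eps) * (U + r * (U - L)) < a * U).
      { assert (Ear : a * r = eps / 2) by (unfold r; field; lra).
        assert (E1 : r * (U - L) <= r * U) by nra.
        assert (E2 : (a - eps) * (r * (U - L)) <= a * (r * U)).
        { apply Rmult_le_compat; try nra. }
        assert (E3 : a * (r * U) = eps / 2 * U) by (rewrite <- Ear; ring).
        assert (E4 : (a - eps) * (U + r * (U - L)) = (a - eps) * U + (a - eps) * (r * (U - L))) by ring.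
        nra. }
      assert ((a - eps) * value N g y <= (a - eps) * (C / a * (U + r * (U - L)))) by (apply Rmult_le_compat_l; lra).
      assert ((a - eps) * (C / a * (U + r * (U - L))) = (C / a) * ((a - eps) * (U + r * (U - L)))) by ring.
      assert (H5 : (C / a) * ((a - eps) * (U + r * (U - L))) < (C / a) * (a * U)).
      { apply Rmult_lt_compat_l; auto. apply Rdiv_lt_0_compat; lra. }
      replace ((C / a) * (a * U)) with (U * C) in H5 by (field; lra).
      lra.
Qed.
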